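(* Let $m\ge 2$ be an integer and $a>0$. Let $\mathcal{H}_\infty$ be the $m$-order infinite dimensional generalized Hilbert tensor with entries $\mathcal{H}_{i_1\cdots i_m}=\frac{1}{i_1+\cdots+i_m-m+a}$, $i_1,\dots,i_m\in\{1,2,\dots\}$, and for $x\in l^1$ let $\mathcal{H}_\infty x^{m-1}$ be the infinite vector with components $$(\mathcal{H}_\infty x^{m-1})_i=\sum_{i_2,\dots,i_m=1}^\infty\frac{x_{i_2}\cdots x_{i_m}}{i+i_2+\cdots+i_m-m+a},\quad i=1,2,\dots.$$ Define $$T_\infty x=\begin{cases}\|x\|_{l^1}^{2-m}\,\mathcal{H}_\infty x^{m-1}, & x\neq\theta,\\ \theta, & x=\theta,\end{cases}$$ and, when $m$ is even, $F_\infty x=(\mathcal{H}_\infty x^{m-1})^{[\frac{1}{m-1}]}$, where $y^{[\frac1{m-1}]}=(y_1^{\frac1{m-1}},y_2^{\frac1{m-1}},\dots)$ (real $(m-1)$-th roots, $m-1$ odd) and $\theta=(0,0,\dots)$. (i) Suppose $m$ is even. If $x\in l^1$, then $F_\infty x\in l^p$ for every $m-1<p<\infty$. Moreover, $F_\infty$ is a bounded, continuous and positively homogeneous operator from $l^1$ into $l^p$ ($m-1<p<\infty$). In particular, $$\|F_\infty\|=\sup_{\|x\|_{l^1}=1}\|F_\infty x\|_{l^{2(m-1)}}\le K(a),\qquad K(a)=\begin{cases}\left(\frac{1}{a^2}+\frac{\pi^2}{6}\right)^{\frac{1}{2(m-1)}}, & 0<a<1,\\ \left(\frac{\pi^2}{6}\right)^{\frac{1}{2(m-1)}},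 & a\ge 1.\end{cases}$$ (ii) If $x\in l^1$, then $T_\infty x\in l^p$ for every $1<p<\infty$. Moreover, $T_\infty$ is a bounded, continuous and positively homogeneous operator from $l^1$ into $l^p$ ($1<p<\infty$). In particular, $$\|T_\infty\|=\sup_{\|x\|_{l^1}=1}\|T_\infty x\|_{l^2}\le C(a),\qquad C(a)=\begin{cases}\sqrt{\frac{1}{a^2}+\frac{\pi^2}{6}}, & 0<a<1,\\ \frac{\pi}{\sqrt6}, & a\ge1.\end{cases}$$
   Context: For $p\ge1$, $l^p$ is the space of real sequences $x=(x_i)_{i=1}^\infty$ with $\|x\|_{l^p}=(\sum_{i=1}^\infty|x_i|^p)^{1/p}<\infty$. For real Banach spaces $X,Y$, an operator $T:X\to Y$ is positively homogeneous if $T(tx)=tT(x)$ for all $t>0$, $x\in X$; it is bounded if there is $M>0$ with $\|Tx\|_Y\le M\|x\|_X$ for all $x\in X$. For a bounded, continuous, positively homogeneous $T$, its norm is $\|T\|=\sup\{\|Tx\|_Y:\|x\|_X=1\}$. *)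

(* Defs.v *)
From Stdlib Require Import Reals Lra ClassicalEpsilon.
From Coquelicot Require Import Coquelicot.
Open Scope R_scope.

(* Sequences are indexed from 0: x i (i : nat) is the paper's x_{i+1}. *)

Definition rpow (y p : R) : R := if Rlt_dec 0 y then Rpower y p else 0.

Definition lp_mem (p : R) (x : nat -> R) : Prop :=
  ex_series (fun i => rpow (Rabs (x i)) p).
Definition lp_norm (p : R) (x : nat -> R) : R :=
  rpow (Series (fun i => rpow (Rabs (x i)) p)) (1 / p).

Definition theta : nat -> R := fun _ => 0.
Definition sscale (t : R) (x : nat -> R) : nat -> R := fun i => t * x i.
Definition ssub (x y : nat -> R) : nat -> R := fun i => x i - y i.

(* Iterated series: Hgen a x 0 s = 1/(s+a),
   Hgen a x (n+1) s = sum_j x_j * Hgen a x n (s + j).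
   With 0-based indices, entry 1/(i1+...+im-m+a) becomes 1/(j1+...+jm+a). *)
Fixpoint Hgen (a : R) (x : nat -> R) (n : nat) (s : R) : R :=
  match n with
  | O => / (s + a)
  | S n' => Series (fun j => x j * Hgen a x n' (s + INR j))
  end.

Definition Hx (m : nat) (a : R) (x : nat -> R) : nat -> R :=
  fun i => Hgen a x (m - 1) (INR i).

Definition oddroot (n : nat) (y : R) : R :=
  if Rlt_dec y 0 then - rpow (- y) (1 / INR n) else rpow y (1 / INR n).

Definition F_inf (m : nat) (a : R) (x : nat -> R) : nat -> R :=
  fun i => oddroot (m - 1) (Hx m a x i).

Definition T_inf (m : nat) (a : R) (x : nat -> R) : nat -> R :=
  if excluded_middle_informative (x = theta) then theta
  else fun i => Rpower (lp_norm 1 x) (2 - INR m) * Hx m a x i.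

Definition bounded_op (p : R) (T : (nat -> R) -> (nat -> R)) : Prop :=
  exists M, 0 < M /\ forall x, lp_mem 1 x -> lp_norm p (T x) <= M * lp_norm 1 x.

Definition continuous_op (p : R) (T : (nat -> R) -> (nat -> R)) : Prop :=
  forall x, lp_mem 1 x -> forall eps, 0 < eps -> exists delta, 0 < delta /\
    forall y, lp_mem 1 y -> lp_norm 1 (ssub y x) < delta ->
      lp_norm p (ssub (T y) (T x)) < eps.

Definition pos_homog (T : (nat -> R) -> (nat -> R)) : Prop :=
  forall x t, lp_mem 1 x -> 0 < t -> T (sscale t x) = sscale t (T x).

Definition K_const (m : nat) (a : R) : R :=
  if Rlt_dec a 1 then Rpower (1 / a ^ 2 + PI ^ 2 / 6) (1 / (2 * (INR m - 1)))
  else Rpower (PI ^ 2 / 6) (1 / (2 * (INR m - 1))).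

Definition C_const (a : R) : R :=
  if Rlt_dec a 1 then sqrt (1 / a ^ 2 + PI ^ 2 / 6) else PI / sqrt 6.

(* Main.v *)
Require Import Defs.
From Stdlib Require Import Reals Lra Lia FunctionalExtensionality ClassicalEpsilon.
From Coquelicot Require Import Coquelicot.
Open Scope R_scope.

Lemma rpow_nonneg y p : 0 <= rpow y p.
Proof. unfold rpow; destruct (Rlt_dec 0 y). unfold Rpower; left; apply exp_pos. lra. Qed.

Lemma rpow_pos_eq y p : 0 < y -> rpow y p = Rpower y p.
Proof. intro H; unfold rpow; destruct (Rlt_dec 0 y); [reflexivity| lra]. Qed.

Lemma rpow_0 p : rpow 0 p = 0.
Proof. unfold rpow; destruct (Rlt_dec 0 0); [lra|reflexivity]. Qed.

Lemma rpow_le u v p : 0 <= u <= v -> 0 < p -> rpow u p <= rpow v p.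
Proof.
  intros [H1 H2] Hp. destruct H1 as [H1|H1].
  - rewrite !rpow_pos_eq by lra. apply Rle_Rpower_l; lra.
  - subst. rewrite rpow_0. apply rpow_nonneg.
Qed.

Lemma rpow_mult u v p : 0 <= u -> 0 <= v -> rpow (u * v) p = rpow u p * rpow v p.
Proof.
  intros Hu Hv. destruct Hu as [Hu|Hu]; [|subst; rewrite Rmult_0_l, !rpow_0; ring].
  destruct Hv as [Hv|Hv]; [|subst; rewrite Rmult_0_r, !rpow_0; ring].
  rewrite !rpow_pos_eq by (try apply Rmult_lt_0_compat; lra).
  symmetry; apply Rpower_mult_distr; lra.
Qed.

Lemma rpow_inv c p : 0 <= c -> 0 < p -> rpow (rpow c p) (1 / p) = c.
Proof.
  intros Hc Hp. destruct Hc as [Hc|Hc]; [|subst; rewrite !rpow_0; reflexivity].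
  rewrite (rpow_pos_eq c) by lra. rewrite rpow_pos_eq by (unfold Rpower; apply exp_pos).
  rewrite Rpower_mult. replace (p * (1/p)) with 1 by (field; lra). apply Rpower_1; lra.
Qed.

Lemma rpow_1 u : 0 <= u -> rpow u 1 = u.
Proof. intros [H|H]; [rewrite rpow_pos_eq by lra; apply Rpower_1; lra| subst; apply rpow_0]. Qed.

Lemma rpow_pow_inv c n : 0 <= c -> (1 <= n)%nat -> rpow (c ^ n) (1 / INR n) = c.
Proof.
  intros Hc Hn. destruct Hc as [Hc|Hc].
  - rewrite rpow_pos_eq by (apply pow_lt; lra). rewrite <- Rpower_pow by lra.
    rewrite Rpower_mult. replace (INR n * (1 / INR n)) with 1. apply Rpower_1; lra.
    field. apply not_0_INR; lia.
  - subst. rewrite pow_i by lia. apply rpow_0.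
Qed.

Definition l1 (x : nat -> R) := ex_series (fun i => Rabs (x i)).
Definition N1 (x : nat -> R) := Series (fun i => Rabs (x i)).

Lemma lp_mem1 x : lp_mem 1 x <-> l1 x.
Proof.
  unfold lp_mem, l1; split; apply ex_series_ext; intro n; rewrite rpow_1; auto; apply Rabs_pos.
Qed.

Lemma ser_bound (f g : nat -> R) : (forall j, Rabs (f j) <= g j) -> ex_series g ->
  ex_series f /\ ex_series (fun j => Rabs (f j)) /\ Rabs (Series f) <= Series g.
Proof.
  intros H Hg.
  assert (Ha : ex_series (fun j => Rabs (f j))).
  { apply (@ex_series_le R_AbsRing R_CompleteNormedModule _ g); auto. intro n. change (Rabs (Rabs (f n)) <= g n). rewrite Rabs_Rabsolu; auto. }
  split; [apply ex_series_Rabs; auto|split; auto].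
  eapply Rle_trans. apply Series_Rabs; auto. apply Series_le; auto. intro n; split; auto; apply Rabs_pos.
Qed.

Lemma Series_nonneg (a : nat -> R) : (forall n, 0 <= a n) -> ex_series a -> 0 <= Series a.
Proof.
  intros H He. assert (E: Series (fun _ => 0) = 0).
  { rewrite (Series_ext _ (fun n => 0 * a n)) by (intro; ring). rewrite Series_scal_l; ring. }
  rewrite <- E. apply Series_le; auto. intro; split; [lra|auto].
Qed.
Lemma sum_n_nonneg (a : nat -> R) n : (forall k, 0 <= a k) -> 0 <= sum_n a n.
Proof.
  intro H; induction n. rewrite sum_O; auto. rewrite sum_Sn. change (0 <= sum_n a n + a (S n)).
  pose proof (H (S n)); lra.
Qed.

Lemma term_le_sum_n (a : nat -> R) n : (forall k, 0 <= a k) -> a n <= sum_n a n.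
Proof.
  intro H; destruct n. rewrite sum_O; lra. rewrite sum_Sn. change (a (S n) <= sum_n a n + a (S n)).
  pose proof (sum_n_nonneg a n H); lra.
Qed.

Lemma sum_n_mono (a : nat -> R) n k : (forall k, 0 <= a k) -> sum_n a n <= sum_n a (n + k).
Proof.
  intro H; induction k. rewrite Nat.add_0_r; lra.
  rewrite Nat.add_succ_r, sum_Sn. change (sum_n a n <= sum_n a (n + k) + a (S (n + k))).
  pose proof (H (S (n+k))); lra.
Qed.

Lemma sum_n_le_Series (a : nat -> R) n : (forall k, 0 <= a k) -> ex_series a -> sum_n a n <= Series a.
Proof.
  intros H He. pose proof (Series_correct _ He) as Hs.
  assert (Hl : is_lim_seq (sum_n a) (Series a)) by exact Hs.
  apply (is_lim_seq_incr_n _ n) in Hl.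
  assert (Hr := is_lim_seq_le (fun _ => sum_n a n) (fun k => sum_n a (k + n)) (sum_n a n) (Series a)).
  simpl in Hr. apply Hr; auto. intro k; rewrite Nat.add_comm; apply sum_n_mono; auto.
  apply is_lim_seq_const.
Qed.

Lemma term_le_Series (a : nat -> R) n : (forall k, 0 <= a k) -> ex_series a -> a n <= Series a.
Proof. intros; eapply Rle_trans; [apply term_le_sum_n|apply sum_n_le_Series]; auto. Qed.

Lemma ex_series_bounded (a : nat -> R) B : (forall n, 0 <= a n) -> (forall n, sum_n a n <= B) ->
  ex_series a /\ Series a <= B.
Proof.
  intros H HB.
  destruct (growing_cv (sum_n a)) as [l Hl].
  - intro n. rewrite sum_Sn. change (sum_n a n <= sum_n a n + a (S n)). pose proof (H (S n)); lra.
  - exists B. intros y [n ->]. auto.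
  - apply is_lim_seq_Reals in Hl.
    assert (Hs : is_series a l) by exact Hl.
    split. exists l; auto.
    rewrite (is_series_unique _ _ Hs).
    assert (Hr := is_lim_seq_le (sum_n a) (fun _ => B) l B HB Hl (is_lim_seq_const B)). exact Hr.
Qed.

Lemma N1_nonneg x : l1 x -> 0 <= N1 x.
Proof. intro H; apply Series_nonneg; auto; intro; apply Rabs_pos. Qed.

Lemma abs_le_N1 x i : l1 x -> Rabs (x i) <= N1 x.
Proof. intro H; apply (term_le_Series (fun i => Rabs (x i))); auto; intro; apply Rabs_pos. Qed.

Lemma N1_zero x : l1 x -> N1 x = 0 -> x = theta.
Proof.
  intros H H0. apply functional_extensionality; intro i. unfold theta.
  pose proof (abs_le_N1 x i H). pose proof (Rabs_pos (x i)).
  destruct (Req_dec (x i) 0); auto. pose proof (Rabs_pos_lt _ H3). lra.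
Qed.

Lemma lp_norm1 x : l1 x -> lp_norm 1 x = N1 x.
Proof.
  intro H. unfold lp_norm. replace (1/1) with 1 by field.
  rewrite (Series_ext _ (fun i => Rabs (x i))). apply rpow_1, N1_nonneg; auto.
  intro; apply rpow_1, Rabs_pos.
Qed.

Lemma l1_sub x y : l1 x -> l1 y -> l1 (ssub y x).
Proof.
  intros Hx Hy. unfold l1, ssub.
  apply (@ex_series_le R_AbsRing R_CompleteNormedModule _ (fun i => Rabs (y i) + Rabs (x i))).
  intro n. change (Rabs (Rabs (y n - x n)) <= Rabs (y n) + Rabs (x n)). rewrite Rabs_Rabsolu.
  unfold Rminus; eapply Rle_trans; [apply Rabs_triang|rewrite Rabs_Ropp; lra].
  apply (ex_series_plus (K:=R_AbsRing) (V:=R_NormedModule)); auto.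
Qed.

Lemma N1_triang x y : l1 x -> l1 y -> N1 y <= N1 x + N1 (ssub y x).
Proof.
  intros Hx Hy. pose proof (l1_sub x y Hx Hy) as Hd. unfold N1.
  rewrite <- Series_plus by auto.
  apply Series_le. intro n; split. apply Rabs_pos. unfold ssub.
  replace (y n) with (x n + (y n - x n)) at 1 by ring. apply Rabs_triang.
  apply (ex_series_plus (K:=R_AbsRing) (V:=R_NormedModule)); auto.
Qed.

Lemma N1_sub_sym x y : l1 x -> l1 y -> N1 (ssub y x) = N1 (ssub x y).
Proof. intros; unfold N1, ssub; apply Series_ext; intro; apply Rabs_minus_sym. Qed.

Lemma N1_diff x y : l1 x -> l1 y -> Rabs (N1 y - N1 x) <= N1 (ssub y x).
Proof.
  intros Hx Hy. pose proof (N1_triang x y Hx Hy). pose proof (N1_triang y x Hy Hx).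
  rewrite (N1_sub_sym y x) in H0 by auto. apply Rabs_le; lra.
Qed.
Definition bq (a q : R) (i : nat) : R := Rpower (INR i + a) (- q).

Lemma ln_ge_1_inv y : 0 < y -> 1 - / y <= ln y.
Proof.
  intro Hy. pose proof (exp_ineq1_le (ln (/ y))). rewrite exp_ln in H by (apply Rinv_0_lt_compat; lra).
  rewrite ln_Rinv in H by lra. lra.
Qed.

Lemma pkey u r : 0 < u -> 1 < r ->
  (r - 1) * Rpower (u + 1) (- r) <= Rpower u (1 - r) - Rpower (u + 1) (1 - r).
Proof.
  intros Hu Hr.
  assert (Hq : u = (u / (u+1)) * (u + 1)) by (field; lra).
  assert (Hq0 : 0 < u / (u+1)) by (apply Rdiv_lt_0_compat; lra).
  assert (E1 : Rpower u (1 - r) = Rpower (u/(u+1)) (1-r) * Rpower (u+1) (1-r)).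
  { rewrite Hq at 1. symmetry; apply Rpower_mult_distr; lra. }
  assert (E2 : Rpower (u+1) (-r) = Rpower (u+1) (1-r) * / (u+1)).
  { replace (-r) with ((1 - r) + - (1)) by ring. rewrite Rpower_plus, Rpower_Ropp, Rpower_1 by lra. reflexivity. }
  rewrite E1, E2.
  assert (HP : 0 < Rpower (u+1) (1-r)) by (unfold Rpower; apply exp_pos).
  assert (Hk : (r - 1) * / (u+1) <= Rpower (u/(u+1)) (1-r) - 1).
  { unfold Rpower. pose proof (exp_ineq1_le ((1 - r) * ln (u / (u + 1)))).
    assert (ln (u / (u+1)) = - ln ((u+1)/u)).
    { rewrite <- ln_Rinv by (apply Rdiv_lt_0_compat; lra). f_equal. field; lra. }
    pose proof (ln_ge_1_inv ((u+1)/u) ltac:(apply Rdiv_lt_0_compat; lra)).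
    replace (/ ((u+1)/u)) with (u/(u+1)) in H1 by (field; lra).
    assert ((r - 1) * (1 - u/(u+1)) <= (r-1) * ln ((u+1)/u)) by (apply Rmult_le_compat_l; lra).
    replace (1 - u/(u+1)) with (/(u+1)) in H2 by (field; lra).
    rewrite H0 in H |- *. replace ((1 - r) * - ln ((u+1)/u)) with ((r-1) * ln((u+1)/u)) in * by ring. lra. }
  assert (Hk2 := Rmult_le_compat_l _ _ _ (Rlt_le _ _ HP) Hk). nra.
Qed.

Lemma bq_pos a q i : 0 < bq a q i.
Proof. unfold bq, Rpower; apply exp_pos. Qed.

Lemma pseries a r : 0 < a -> 1 < r ->
  ex_series (bq a r) /\ Series (bq a r) <= Rpower a (- r) + Rpower a (1 - r) / (r - 1).
Proof.
  intros Ha Hr. apply ex_series_bounded. intro; left; apply bq_pos.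
  assert (H : forall n, sum_n (bq a r) n <= Rpower a (-r) + (Rpower a (1-r) - Rpower (INR n + a) (1 - r)) / (r - 1)).
  { induction n.
    - rewrite sum_O. unfold bq. simpl. rewrite Rplus_0_l. replace (Rpower a (1 - r) - Rpower a (1 - r)) with 0 by ring.
      unfold Rdiv; rewrite Rmult_0_l; lra.
    - rewrite sum_Sn. change (sum_n (bq a r) n + bq a r (S n) <= Rpower a (- r) + (Rpower a (1 - r) - Rpower (INR (S n) + a) (1 - r)) / (r - 1)).
      pose proof (pkey (INR n + a) r ltac:(pose proof (pos_INR n); lra) Hr).
      unfold bq in *. rewrite S_INR. replace (INR n + 1 + a) with (INR n + a + 1) by ring.
      assert (bq a r (S n) * (r - 1) <= Rpower (INR n + a) (1 - r) - Rpower (INR n + a + 1) (1 - r)).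
      { unfold bq; rewrite S_INR. replace (INR n + 1 + a) with (INR n + a + 1) by ring. lra. }
      unfold bq in H0; rewrite S_INR in H0. replace (INR n + 1 + a) with (INR n + a + 1) in H0 by ring.
      apply (Rmult_le_compat_r (/ (r - 1))) in H0; [|left; apply Rinv_0_lt_compat; lra].
      rewrite Rmult_assoc, Rinv_r, Rmult_1_r in H0 by lra.
      unfold Rdiv in *. lra. }
  intro n. eapply Rle_trans. apply H. 
  assert (0 < Rpower (INR n + a) (1 - r)) by (unfold Rpower; apply exp_pos).
  assert (0 < / (r-1)) by (apply Rinv_0_lt_compat; lra).
  unfold Rdiv. nra.
Qed.
Definition Zs (a r : R) := Series (bq a r).

Lemma ex_scal (c : R) (g : nat -> R) : ex_series g -> ex_series (fun i => c * g i).
Proof. intro H. apply (ex_series_scal_l (K:=R_AbsRing) (V:=R_NormedModule) c) in H. exact H. Qed.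

Lemma rpow_bq a q p i : 0 < a -> rpow (bq a q i) p = bq a (q * p) i.
Proof.
  intro Ha. rewrite rpow_pos_eq by apply bq_pos. unfold bq. rewrite Rpower_mult. f_equal. ring.
Qed.

Lemma lp_bound a p q c (z : nat -> R) : 0 < a -> 0 < p -> 0 < q -> 1 < q * p -> 0 <= c ->
  (forall i, Rabs (z i) <= c * bq a q i) ->
  lp_mem p z /\ lp_norm p z <= c * rpow (Zs a (q * p)) (1 / p).
Proof.
  intros Ha Hp Hq Hqp Hc H.
  destruct (pseries a (q * p) Ha Hqp) as [HZ _].
  assert (Hle : forall i, Rabs (rpow (Rabs (z i)) p) <= rpow c p * bq a (q * p) i).
  { intro i. rewrite Rabs_right by (apply Rle_ge, rpow_nonneg).
    rewrite <- rpow_bq by auto. rewrite <- rpow_mult by (auto; left; apply bq_pos).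
    apply rpow_le; auto. split; [apply Rabs_pos| auto]. }
  destruct (ser_bound _ _ Hle (ex_scal _ _ HZ)) as [Hex [_ Hs]].
  split; auto.
  unfold lp_norm. rewrite Series_scal_l in Hs.
  assert (0 <= Zs a (q * p)) by (apply Series_nonneg; auto; intro; left; apply bq_pos).
  assert (0 <= Series (fun i => rpow (Rabs (z i)) p)) by (apply Series_nonneg; auto; intro; apply rpow_nonneg).
  rewrite Rabs_right in Hs by lra.
  eapply Rle_trans. apply rpow_le. split. auto. apply Hs. apply Rdiv_lt_0_compat; lra.
  rewrite rpow_mult by (auto; apply rpow_nonneg). rewrite rpow_inv by auto. unfold Zs. lra.
Qed.
Lemma ex_absK x K : l1 x -> ex_series (fun j => Rabs (x j) * K).
Proof. intro H. apply (ex_series_ext (K:=R_AbsRing) (V:=R_NormedModule) (fun j => K * Rabs (x j))). intro; apply Rmult_comm. apply ex_scal; auto. Qed.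

Lemma ser_absK x K : Series (fun j => Rabs (x j) * K) = N1 x * K.
Proof. rewrite (Series_ext _ (fun j => K * Rabs (x j))) by (intro; ring). rewrite Series_scal_l. unfold N1; ring. Qed.

Lemma inv_shift_le s a j : 0 <= s -> 0 < a -> / (s + INR j + a) <= / (s + a).
Proof. intros. pose proof (pos_INR j). apply Rinv_le_contravar; lra. Qed.

Lemma Hgen_bound a x n : 0 < a -> l1 x -> forall s, 0 <= s ->
  Rabs (Hgen a x n s) <= N1 x ^ n / (s + a) /\
  (n <> 0%nat -> ex_series (fun j => x j * Hgen a x (pred n) (s + INR j))).
Proof.
  intros Ha Hx. pose proof (N1_nonneg x Hx) as HN.
  induction n; intros s Hs.
  - simpl. split; [|congruence]. rewrite Rabs_right. lra. apply Rle_ge; left; apply Rinv_0_lt_compat; lra.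
  - assert (Hle : forall j, Rabs (x j * Hgen a x n (s + INR j)) <= Rabs (x j) * (N1 x ^ n / (s + a))).
    { intro j. rewrite Rabs_mult. apply Rmult_le_compat_l. apply Rabs_pos.
      destruct (IHn (s + INR j)) as [H _]. pose proof (pos_INR j); lra.
      eapply Rle_trans. apply H. unfold Rdiv. apply Rmult_le_compat_l. apply pow_le; auto.
      apply inv_shift_le; auto. }
    destruct (ser_bound _ _ Hle (ex_absK x _ Hx)) as [Hex [_ Hs']].
    split; [|intros _; exact Hex].
    simpl Hgen. rewrite ser_absK in Hs'. eapply Rle_trans. apply Hs'. simpl. unfold Rdiv; lra.
Qed.

Lemma Hgen_ex a x n s : 0 < a -> l1 x -> 0 <= s -> ex_series (fun j => x j * Hgen a x n (s + INR j)).
Proof. intros. destruct (Hgen_bound a x (S n) H H0 s H1) as [_ H2]. apply H2. congruence. Qed.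

Lemma Hgen_lip a x y n : 0 < a -> l1 x -> l1 y -> forall s, 0 <= s ->
  Rabs (Hgen a y n s - Hgen a x n s) <= INR n * (N1 x + N1 y + 1) ^ n * N1 (ssub y x) / (s + a).
Proof.
  intros Ha Hx Hy. pose proof (N1_nonneg x Hx) as HNx. pose proof (N1_nonneg y Hy) as HNy.
  pose proof (N1_nonneg _ (l1_sub x y Hx Hy)) as HD. pose proof (l1_sub x y Hx Hy) as Hd.
  set (M := N1 x + N1 y + 1). set (D := N1 (ssub y x)).
  induction n; intros s Hs.
  - simpl. rewrite Rminus_eq_0, Rabs_R0. unfold Rdiv. rewrite !Rmult_0_l. lra.
  - simpl Hgen. rewrite <- Series_minus by (apply Hgen_ex; auto).
    assert (Hle : forall j, Rabs (y j * Hgen a y n (s + INR j) - x j * Hgen a x n (s + INR j))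
       <= Rabs (ssub y x j) * (N1 y ^ n / (s + a)) + Rabs (x j) * (INR n * M ^ n * D / (s + a))).
    { intro j. pose proof (pos_INR j).
      replace (y j * Hgen a y n (s + INR j) - x j * Hgen a x n (s + INR j)) with
        (ssub y x j * Hgen a y n (s + INR j) + x j * (Hgen a y n (s + INR j) - Hgen a x n (s + INR j)))
        by (unfold ssub; ring).
      eapply Rle_trans. apply Rabs_triang. rewrite !Rabs_mult. apply Rplus_le_compat.
      - apply Rmult_le_compat_l. apply Rabs_pos.
        destruct (Hgen_bound a y n Ha Hy (s + INR j)) as [H' _]. lra.
        eapply Rle_trans. apply H'. unfold Rdiv. apply Rmult_le_compat_l. apply pow_le; auto.
        apply inv_shift_le; auto.
      - apply Rmult_le_compat_l. apply Rabs_pos.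
        eapply Rle_trans. apply IHn. lra. unfold Rdiv. apply Rmult_le_compat_l.
        apply Rmult_le_pos; auto. apply Rmult_le_pos. apply pos_INR. apply pow_le. unfold M; lra.
        apply inv_shift_le; auto. }
    assert (Hg : ex_series (fun j => Rabs (ssub y x j) * (N1 y ^ n / (s + a)) + Rabs (x j) * (INR n * M ^ n * D / (s + a)))).
    { apply (ex_series_plus (K:=R_AbsRing) (V:=R_NormedModule)); apply ex_absK; auto. }
    destruct (ser_bound _ _ Hle Hg) as [_ [_ Hs']].
    rewrite Series_plus in Hs' by (apply ex_absK; auto).
    rewrite !ser_absK in Hs'. eapply Rle_trans. apply Hs'.
    fold D.
    assert (HM1 : 1 <= M) by (unfold M; lra).
    assert (Hyn : N1 y ^ n <= M ^ n) by (apply pow_incr; unfold M; lra).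
    assert (HMn : M ^ n <= M ^ n * M) by (pose proof (pow_le M n ltac:(lra)); nra).
    assert (Hxn : N1 x * (INR n * M ^ n * D) <= INR n * (M ^ n * M) * D).
    { pose proof (pos_INR n). pose proof (pow_le M n ltac:(lra)).
      assert (N1 x <= M) by (unfold M; lra).
      replace (INR n * (M ^ n * M) * D) with (M * (INR n * M ^ n * D)) by ring.
      apply Rmult_le_compat_r; auto. apply Rmult_le_pos; auto. apply Rmult_le_pos; auto. }
    rewrite S_INR. simpl pow.
    assert (0 < / (s + a)) by (apply Rinv_0_lt_compat; lra).
    unfold Rdiv.
    assert (D * N1 y ^ n <= D * (M ^ n * M)) by (apply Rmult_le_compat_l; [exact HD| lra]).
    replace ((INR n + 1) * (M * M ^ n) * D * / (s + a)) with
       ((D * (M ^ n * M) + INR n * (M ^ n * M) * D) * / (s + a)) by ring.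
    replace (D * (N1 y ^ n * / (s + a)) + N1 x * (INR n * M ^ n * D * / (s + a))) with
       ((D * N1 y ^ n + N1 x * (INR n * M ^ n * D)) * / (s + a)) by ring.
    apply Rmult_le_compat_r; lra.
Qed.

Lemma Hgen_scale a x t n s : Hgen a (sscale t x) n s = t ^ n * Hgen a x n s.
Proof.
  revert s; induction n; intro s; simpl. ring.
  rewrite (Series_ext _ (fun j => (t * t ^ n) * (x j * Hgen a x n (s + INR j)))).
  apply Series_scal_l. intro j. rewrite IHn. unfold sscale. ring.
Qed.
Definition Ik (k : nat) : R := RInt (fun x => cos x ^ (2 * k)) 0 (PI / 2).
Definition Jk (k : nat) : R := RInt (fun x => x ^ 2 * cos x ^ (2 * k)) 0 (PI / 2).

Lemma PI2_pos : 0 < PI / 2.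
Proof. pose proof PI_RGT_0; lra. Qed.

Lemma cderiv (f : R -> R) x : ex_derive f x -> continuous f x.
Proof. apply (@ex_derive_continuous R_AbsRing R_NormedModule). Qed.

Lemma ex_I k : ex_RInt (fun x => cos x ^ (2 * k)) 0 (PI / 2).
Proof. apply (@ex_RInt_continuous R_CompleteNormedModule). intros z _. apply cderiv. auto_derive. auto. Qed.

Lemma ex_J k : ex_RInt (fun x => x ^ 2 * cos x ^ (2 * k)) 0 (PI / 2).
Proof. apply (@ex_RInt_continuous R_CompleteNormedModule). intros z _. apply cderiv. auto_derive. auto. Qed.

Lemma zero_int (F f : R -> R) : (forall x, is_derive F x (f x)) -> (forall x, continuous f x) ->
  F 0 = 0 -> F (PI/2) = 0 -> is_RInt f 0 (PI/2) 0.
Proof.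
  intros Hd Hc H0 H1. pose proof (@is_RInt_derive R_CompleteNormedModule F f 0 (PI/2) (fun x _ => Hd x) (fun x _ => Hc x)).
  rewrite H0, H1, minus_eq_zero in H. exact H.
Qed.

Lemma lin2 (f g : R -> R) al be : ex_RInt f 0 (PI/2) -> ex_RInt g 0 (PI/2) ->
  is_RInt (fun x => al * f x + be * g x) 0 (PI/2) 0 ->
  al * RInt f 0 (PI/2) + be * RInt g 0 (PI/2) = 0.
Proof.
  intros Hf Hg H.
  pose proof (is_RInt_plus _ _ _ _ _ _ (is_RInt_scal _ _ _ al _ (RInt_correct _ _ _ Hf))
      (is_RInt_scal _ _ _ be _ (RInt_correct _ _ _ Hg))) as H2.
  assert (H3 : is_RInt (fun x => al * f x + be * g x) 0 (PI/2) (al * RInt f 0 (PI/2) + be * RInt g 0 (PI/2))) by exact H2.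
  apply (@is_RInt_unique R_CompleteNormedModule) in H. apply (@is_RInt_unique R_CompleteNormedModule) in H3. congruence.
Qed.

Lemma lin3 (f g h : R -> R) al be ga : ex_RInt f 0 (PI/2) -> ex_RInt g 0 (PI/2) -> ex_RInt h 0 (PI/2) ->
  is_RInt (fun x => al * f x + be * g x + ga * h x) 0 (PI/2) 0 ->
  al * RInt f 0 (PI/2) + be * RInt g 0 (PI/2) + ga * RInt h 0 (PI/2) = 0.
Proof.
  intros Hf Hg Hh H.
  pose proof (is_RInt_plus _ _ _ _ _ _ (is_RInt_plus _ _ _ _ _ _ (is_RInt_scal _ _ _ al _ (RInt_correct _ _ _ Hf))
      (is_RInt_scal _ _ _ be _ (RInt_correct _ _ _ Hg))) (is_RInt_scal _ _ _ ga _ (RInt_correct _ _ _ Hh))) as H2.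
  assert (H3 : is_RInt (fun x => al * f x + be * g x + ga * h x) 0 (PI/2) (al * RInt f 0 (PI/2) + be * RInt g 0 (PI/2) + ga * RInt h 0 (PI/2))) by exact H2.
  apply (@is_RInt_unique R_CompleteNormedModule) in H. apply (@is_RInt_unique R_CompleteNormedModule) in H3. congruence.
Qed.


Lemma recB k : 2 * INR (S k) * Ik (S k) - (2 * INR k + 1) * Ik k = 0.
Proof.
  unfold Ik. replace (2 * INR (S k) * RInt (fun x => cos x ^ (2 * S k)) 0 (PI / 2) - (2 * INR k + 1) * RInt (fun x => cos x ^ (2 * k)) 0 (PI / 2))
    with (2 * INR (S k) * RInt (fun x => cos x ^ (2 * S k)) 0 (PI / 2) + (-(2 * INR k + 1)) * RInt (fun x => cos x ^ (2 * k)) 0 (PI / 2)) by ring.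
  apply lin2; try apply ex_I.
  apply zero_int with (F := fun x => sin x * cos x ^ (S (2 * k))).
  - intro x. auto_derive. auto.
    change (match (k + (k + 0))%nat with 0%nat => 1 | S _ => INR (k + (k + 0)) + 1 end) with (INR (S (k + (k+0)))).
    assert (Hsc: sin x * sin x = 1 - cos x * cos x) by (pose proof (sin2_cos2 x); unfold Rsqr in *; lra).
    rewrite !Nat.add_0_r. replace (2 * S k)%nat with (S (S (k + k))) by lia. replace (2 * k)%nat with (k + k)%nat by lia.
    simpl pow. rewrite !S_INR, !plus_INR.
    match goal with |- ?L = ?R => transitivity (R + (- (2 * INR k + 1) * cos x ^ (k + k)) * (sin x * sin x - (1 - cos x * cos x))); [ring | rewrite Hsc; ring] end.
  - intro x. apply cderiv. auto_derive. auto.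
  - rewrite sin_0; ring.
  - rewrite cos_PI2. simpl. ring.
Qed.

Lemma recA k : Ik (S k) + 2 * INR (S k) ^ 2 * Jk (S k) + (- (INR (S k) * (2 * INR k + 1))) * Jk k = 0.
Proof.
  unfold Ik, Jk. rewrite <- (Rmult_1_l (RInt (fun x => cos x ^ (2 * S k)) 0 (PI/2))).
  apply (lin3 (fun x => cos x ^ (2 * S k)) (fun x => x ^ 2 * cos x ^ (2 * S k)) (fun x => x ^ 2 * cos x ^ (2 * k))); [apply ex_I | apply ex_J | apply ex_J |].
  apply zero_int with (F := fun x => x * cos x ^ (S (S (2 * k))) + INR (S k) * x ^ 2 * sin x * cos x ^ (S (2 * k))).
  - intro x. auto_derive. auto.
    change (match (k + (k + 0))%nat with 0%nat => 1 | S _ => INR (k + (k + 0)) + 1 end) with (INR (S (k + (k+0)))).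
    change (match k with 0%nat => 1 | S _ => INR k + 1 end) with (INR (S k)).
    assert (Hsc: sin x * sin x = 1 - cos x * cos x) by (pose proof (sin2_cos2 x); unfold Rsqr in *; lra).
    rewrite !Nat.add_0_r. replace (2 * S k)%nat with (S (S (k + k))) by lia. replace (2 * k)%nat with (k + k)%nat by lia.
    rewrite !S_INR, !plus_INR. simpl pow.
    match goal with |- ?L = ?R => transitivity (R + (- (INR k + 1) * (2 * INR k + 1) * (x * x) * cos x ^ (k + k)) * (sin x * sin x - (1 - cos x * cos x))); [ring | rewrite Hsc; ring] end.
  - intro x. apply cderiv. auto_derive. auto.
  - rewrite Rmult_0_l, pow_i by lia. ring.
  - rewrite cos_PI2, !pow_i by lia. ring.
Qed.


Lemma I0 : Ik 0 = PI / 2.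
Proof.
  unfold Ik. apply (@is_RInt_unique R_CompleteNormedModule).
  assert (H := @is_RInt_derive R_CompleteNormedModule (fun x => x) (fun _ => 1) 0 (PI/2)
     (fun x _ => ltac:(auto_derive; auto)) (fun x _ => continuous_const 1 x)).
  change (is_RInt (fun _ => 1) 0 (PI/2) (PI/2 - 0)) in H. replace (PI/2 - 0) with (PI/2) in H by ring.
  eapply is_RInt_ext; [|exact H]. intros. simpl. reflexivity.
Qed.

Lemma J0 : Jk 0 = PI ^ 3 / 24.
Proof.
  unfold Jk. apply (@is_RInt_unique R_CompleteNormedModule).
  assert (H := @is_RInt_derive R_CompleteNormedModule (fun x => x ^ 3 / 3) (fun x => x ^ 2) 0 (PI/2)
     (fun x _ => ltac:(auto_derive; [auto| simpl; field])) (fun x _ => cderiv (fun x => x ^ 2) x ltac:(auto_derive; auto))).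
  change (is_RInt (fun x => x ^ 2) 0 (PI/2) ((PI/2) ^ 3 / 3 - 0 ^ 3 / 3)) in H. replace ((PI/2) ^ 3 / 3 - 0 ^ 3 / 3) with (PI ^ 3 / 24) in H by field.
  eapply is_RInt_ext; [|exact H]. intros. simpl. ring.
Qed.

Lemma I_pos k : 0 < Ik k.
Proof.
  induction k. rewrite I0; apply PI2_pos.
  pose proof (recB k). pose proof (pos_INR k). rewrite S_INR in H.
  assert (Ik (S k) = (2 * INR k + 1) * Ik k / (2 * (INR k + 1))) by (field_simplify_eq; lra).
  rewrite H1. apply Rdiv_lt_0_compat; [apply Rmult_lt_0_compat|]; lra.
Qed.

Lemma J_nonneg k : 0 <= Jk k.
Proof.
  unfold Jk. apply RInt_ge_0. left; apply PI2_pos. apply ex_J.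
  intros x _. apply Rmult_le_pos. apply pow2_ge_0. rewrite pow_mult. apply pow_le. apply pow2_ge_0.
Qed.

Lemma basel_step k : / (INR k + 1) ^ 2 = 2 * Jk k / Ik k - 2 * Jk (S k) / Ik (S k).
Proof.
  pose proof (recA k) as HA. pose proof (recB k) as HB. pose proof (I_pos k). pose proof (I_pos (S k)).
  pose proof (pos_INR k). rewrite S_INR in HA, HB.
  assert (EI : Ik k = 2 * (INR k + 1) * Ik (S k) / (2 * INR k + 1)) by (field_simplify_eq; lra).
  assert (EJ : Jk k = (Ik (S k) + 2 * (INR k + 1) ^ 2 * Jk (S k)) / ((INR k + 1) * (2 * INR k + 1))).
  { field_simplify_eq; [lra|]. split; lra. }
  rewrite EI, EJ. field. repeat split; lra.
Qed.

Lemma basel_sum k : sum_n (fun i => / (INR i + 1) ^ 2) k = PI ^ 2 / 6 - 2 * Jk (S k) / Ik (S k).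
Proof.
  assert (E0 : 2 * Jk 0 / Ik 0 = PI ^ 2 / 6).
  { rewrite I0, J0. field. pose proof PI_RGT_0; lra. }
  induction k.
  - rewrite sum_O, basel_step, E0. reflexivity.
  - rewrite sum_Sn, IHk. change (PI ^ 2 / 6 - 2 * Jk (S k) / Ik (S k) + / (INR (S k) + 1) ^ 2 = PI ^ 2 / 6 - 2 * Jk (S (S k)) / Ik (S (S k))).
    rewrite basel_step. ring.
Qed.

Lemma basel : ex_series (fun i => / (INR i + 1) ^ 2) /\ Series (fun i => / (INR i + 1) ^ 2) <= PI ^ 2 / 6.
Proof.
  apply ex_series_bounded.
  - intro n. left. apply Rinv_0_lt_compat, pow_lt. pose proof (pos_INR n); lra.
  - intro n. rewrite basel_sum. pose proof (J_nonneg (S n)). pose proof (I_pos (S n)).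
    assert (0 <= 2 * Jk (S n) / Ik (S n)) by (apply Rdiv_le_0_compat; lra). lra.
Qed.
Lemma Rpower_inv_base u q : 0 < u -> Rpower (/ u) q = / Rpower u q.
Proof. intro H. unfold Rpower. rewrite ln_Rinv by auto. rewrite <- exp_Ropp. f_equal. ring. Qed.

Lemma Rpower_ge_self l al : 0 < l <= 1 -> 0 < al <= 1 -> l <= Rpower l al.
Proof.
  intros Hl Ha. assert (H1 : 1 <= / l).
  { rewrite <- Rinv_1. apply Rinv_le_contravar; lra. }
  pose proof (Rle_Rpower (/ l) al 1 H1 (proj2 Ha)).
  rewrite Rpower_1 in H by lra. rewrite Rpower_inv_base in H by lra.
  assert (0 < Rpower l al) by (unfold Rpower; apply exp_pos).
  apply Rinv_le_contravar in H; [| apply Rinv_0_lt_compat; lra].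
  rewrite !Rinv_inv in H. exact H.
Qed.

Lemma rpow_subadd s t al : 0 <= s -> 0 <= t -> 0 < al <= 1 -> rpow (s + t) al <= rpow s al + rpow t al.
Proof.
  intros Hs Ht Ha. destruct Hs as [Hs|Hs]; [|subst; rewrite Rplus_0_l, rpow_0; lra].
  destruct Ht as [Ht|Ht]; [|subst; rewrite Rplus_0_r, rpow_0; lra].
  set (w := s + t). assert (Hw : 0 < w) by (unfold w; lra).
  rewrite !rpow_pos_eq by lra.
  assert (Es : s = w * (s / w)) by (field; lra). assert (Et : t = w * (t / w)) by (field; lra).
  rewrite Es at 1. rewrite Et at 1.
  rewrite <- !Rpower_mult_distr by (try apply Rdiv_lt_0_compat; lra).
  assert (H1 : s / w <= Rpower (s / w) al).
  { apply Rpower_ge_self; auto. split. apply Rdiv_lt_0_compat; lra. apply Rmult_le_reg_r with w; auto. unfold Rdiv; rewrite Rmult_assoc, Rinv_l by lra. unfold w; lra. }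
  assert (H2 : t / w <= Rpower (t / w) al).
  { apply Rpower_ge_self; auto. split. apply Rdiv_lt_0_compat; lra. apply Rmult_le_reg_r with w; auto. unfold Rdiv; rewrite Rmult_assoc, Rinv_l by lra. unfold w; lra. }
  assert (Hsum : s / w + t / w = 1) by (unfold w; field; lra).
  assert (HP : 0 < Rpower w al) by (unfold Rpower; apply exp_pos).
  nra.
Qed.

Lemma rpow_lip s t al : 0 <= s -> 0 <= t -> 0 < al <= 1 -> Rabs (rpow s al - rpow t al) <= rpow (Rabs (s - t)) al.
Proof.
  intros Hs Ht Ha. destruct (Rle_dec t s) as [H|H].
  - rewrite Rabs_right with (r := s - t) by lra.
    pose proof (rpow_subadd t (s - t) al Ht ltac:(lra) Ha). replace (t + (s - t)) with s in H0 by ring.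
    pose proof (rpow_le t s al ltac:(lra) ltac:(lra)). rewrite Rabs_right by lra. lra.
  - rewrite Rabs_left1 with (a := s - t) by lra.
    pose proof (rpow_subadd s (t - s) al Hs ltac:(lra) Ha). replace (s + (t - s)) with t in H0 by ring.
    pose proof (rpow_le s t al ltac:(lra) ltac:(lra)). rewrite Rabs_left1 by lra.
    replace (- (s - t)) with (t - s) by ring. lra.
Qed.

Lemma alpha_bounds n : (1 <= n)%nat -> 0 < 1 / INR n <= 1.
Proof.
  intro H. assert (1 <= INR n) by (replace 1 with (INR 1) by reflexivity; apply le_INR; auto).
  split. apply Rdiv_lt_0_compat; lra.
  unfold Rdiv; rewrite Rmult_1_l. rewrite <- Rinv_1. apply Rinv_le_contravar; lra.
Qed.

Lemma oddroot_abs n y : Rabs (oddroot n y) = rpow (Rabs y) (1 / INR n).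
Proof.
  unfold oddroot. destruct (Rlt_dec y 0).
  - rewrite Rabs_Ropp, (Rabs_left y r). rewrite Rabs_right; [reflexivity | apply Rle_ge, rpow_nonneg].
  - rewrite Rabs_right with (r := y) by lra. rewrite Rabs_right; [reflexivity | apply Rle_ge, rpow_nonneg].
Qed.

Lemma oddroot_holder n u v : (1 <= n)%nat ->
  Rabs (oddroot n u - oddroot n v) <= 2 * rpow (Rabs (u - v)) (1 / INR n).
Proof.
  intro Hn. pose proof (alpha_bounds n Hn) as Ha. set (al := 1 / INR n) in *.
  assert (Hnn : 0 <= rpow (Rabs (u - v)) al) by apply rpow_nonneg.
  unfold oddroot; fold al. destruct (Rlt_dec u 0) as [Hu|Hu]; destruct (Rlt_dec v 0) as [Hv|Hv].
  - replace (- rpow (- u) al - - rpow (- v) al) with (- (rpow (- u) al - rpow (- v) al)) by ring.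
    rewrite Rabs_Ropp. replace (Rabs (u - v)) with (Rabs (-u - - v)) by (replace (-u - - v) with (-(u - v)) by ring; apply Rabs_Ropp).
    pose proof (rpow_lip (-u) (-v) al ltac:(lra) ltac:(lra) Ha). pose proof (rpow_nonneg (Rabs (-u - - v)) al). lra.
  - pose proof (rpow_nonneg (-u) al). pose proof (rpow_nonneg v al).
    rewrite Rabs_left1 by lra. rewrite Rabs_left1 by lra.
    pose proof (rpow_le (-u) (-(u - v)) al ltac:(lra) ltac:(lra)).
    pose proof (rpow_le v (-(u - v)) al ltac:(lra) ltac:(lra)). lra.
  - pose proof (rpow_nonneg (-v) al). pose proof (rpow_nonneg u al).
    rewrite Rabs_right by lra. rewrite Rabs_right by lra.
    pose proof (rpow_le (-v) (u - v) al ltac:(lra) ltac:(lra)).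
    pose proof (rpow_le u (u - v) al ltac:(lra) ltac:(lra)). lra.
  - pose proof (rpow_lip u v al ltac:(lra) ltac:(lra) Ha). lra.
Qed.

Lemma oddroot_scale n t y : (1 <= n)%nat -> 0 < t -> oddroot n (t ^ n * y) = t * oddroot n y.
Proof.
  intros Hn Ht. assert (Htn : 0 < t ^ n) by (apply pow_lt; auto).
  assert (E : rpow (t ^ n) (1 / INR n) = t) by (apply rpow_pow_inv; [lra|exact Hn]).
  unfold oddroot. destruct (Rlt_dec y 0) as [Hy|Hy]; destruct (Rlt_dec (t ^ n * y) 0) as [Hty|Hty].
  - replace (- (t ^ n * y)) with (t ^ n * - y) by ring. rewrite rpow_mult, E by lra. ring.
  - exfalso. assert (0 < t ^ n * - y) by (apply Rmult_lt_0_compat; lra). lra.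
  - exfalso. assert (0 <= t ^ n * y) by (apply Rmult_le_pos; lra). lra.
  - rewrite rpow_mult, E by lra. ring.
Qed.

Lemma rpow_cont r c e : 0 < c -> 0 < e -> exists d, 0 < d /\
  forall t, Rabs (t - c) < d -> Rabs (Rpower t r - Rpower c r) < e.
Proof.
  intros Hc He.
  assert (Hcont : continuity_pt (fun t => exp (r * ln t)) c).
  { apply continuity_pt_filterlim. apply (cderiv (fun t => exp (r * ln t)) c). auto_derive. auto. }
  destruct (Hcont e He) as [d [Hd H]]. exists d; split; auto.
  intros t Ht. destruct (Req_dec t c). subst. unfold Rminus; rewrite Rplus_opp_r, Rabs_R0; auto.
  apply (H t). split. split. exact I. auto. exact Ht.
Qed.
Lemma bq1 a i : 0 < a -> bq a 1 i = / (INR i + a).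
Proof. intro Ha. unfold bq. rewrite Rpower_Ropp, Rpower_1; auto. pose proof (pos_INR i); lra. Qed.

Lemma bq2 a i : 0 < a -> bq a 2 i = / (INR i + a) ^ 2.
Proof.
  intro Ha. unfold bq. rewrite Rpower_Ropp. f_equal.
  replace 2 with (INR 2) at 1 by (simpl; ring). apply Rpower_pow. pose proof (pos_INR i); lra.
Qed.

Lemma Zs_pos a r : 0 < a -> 1 < r -> 0 < Zs a r.
Proof.
  intros Ha Hr. destruct (pseries a r Ha Hr) as [He _].
  eapply Rlt_le_trans. apply (bq_pos a r 0). apply term_le_Series; auto. intro; left; apply bq_pos.
Qed.

Lemma Z2_bound a : 0 < a -> Zs a 2 <= (if Rlt_dec a 1 then 1 / a ^ 2 + PI ^ 2 / 6 else PI ^ 2 / 6).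
Proof.
  intro Ha. destruct basel as [Hb1 Hb2]. destruct (pseries a 2 Ha ltac:(lra)) as [He _].
  unfold Zs. destruct (Rlt_dec a 1) as [H1|H1].
  - rewrite Series_incr_1 by auto. rewrite bq2 by auto. simpl INR. rewrite Rplus_0_l.
    assert (Series (fun k => bq a 2 (S k)) <= Series (fun i => / (INR i + 1) ^ 2)).
    { apply Series_le; auto. intro k. rewrite bq2 by auto. pose proof (pos_INR k). rewrite S_INR. split.
      left; apply Rinv_0_lt_compat, pow_lt; lra.
      apply Rinv_le_contravar. apply pow_lt; lra. apply pow_incr; lra. }
    unfold Rdiv at 1. rewrite Rmult_1_l. lra.
  - eapply Rle_trans; [|exact Hb2]. apply Series_le; auto. intro k. rewrite bq2 by auto. pose proof (pos_INR k). split.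
    left; apply Rinv_0_lt_compat, pow_lt; lra.
    apply Rinv_le_contravar. apply pow_lt; lra. apply pow_incr; lra.
Qed.

Lemma Hx_bound m a x i : 0 < a -> l1 x -> Rabs (Hx m a x i) <= N1 x ^ (m - 1) * bq a 1 i.
Proof.
  intros Ha Hl. unfold Hx. destruct (Hgen_bound a x (m - 1) Ha Hl (INR i) (pos_INR i)) as [H _].
  rewrite bq1 by auto. exact H.
Qed.

Lemma Hx_lip m a x y i : 0 < a -> l1 x -> l1 y ->
  Rabs (Hx m a y i - Hx m a x i) <= INR (m - 1) * (N1 x + N1 y + 1) ^ (m - 1) * N1 (ssub y x) * bq a 1 i.
Proof.
  intros Ha Hl Hy. unfold Hx. rewrite bq1 by auto. apply Hgen_lip; auto. apply pos_INR.
Qed.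

Lemma Hx_scale m a x t i : Hx m a (sscale t x) i = t ^ (m - 1) * Hx m a x i.
Proof. unfold Hx. apply Hgen_scale. Qed.

Lemma op_props a q p (T : (nat -> R) -> (nat -> R)) : 0 < a -> 0 < q -> 0 < p -> 1 < q * p ->
  (forall x, l1 x -> forall i, Rabs (T x i) <= N1 x * bq a q i) ->
  (forall x, l1 x -> forall eps, 0 < eps -> exists d, 0 < d /\ forall y, l1 y -> N1 (ssub y x) < d ->
     forall i, Rabs (T y i - T x i) <= eps * bq a q i) ->
  (forall x, lp_mem 1 x -> lp_mem p (T x)) /\ bounded_op p T /\ continuous_op p T.
Proof.
  intros Ha Hq Hp Hqp HB HC.
  set (C := rpow (Zs a (q * p)) (1 / p)).
  assert (HC0 : 0 <= C) by apply rpow_nonneg.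
  split; [|split].
  - intros x Hx. apply lp_mem1 in Hx. apply (lp_bound a p q (N1 x)); auto. apply N1_nonneg; auto.
  - exists (C + 1). split. lra. intros x Hx. apply lp_mem1 in Hx.
    destruct (lp_bound a p q (N1 x) (T x) Ha Hp Hq Hqp (N1_nonneg x Hx) (HB x Hx)) as [_ H].
    rewrite lp_norm1 by auto. fold C in H. pose proof (N1_nonneg x Hx). nra.
  - intros x Hx eps He. apply lp_mem1 in Hx.
    destruct (HC x Hx (eps / (2 * (C + 1)))) as [d [Hd Hy]].
    { apply Rdiv_lt_0_compat; lra. }
    exists d. split; auto. intros y Hy1 Hyd. apply lp_mem1 in Hy1.
    rewrite lp_norm1 in Hyd by (apply l1_sub; auto).
    destruct (lp_bound a p q (eps / (2 * (C + 1))) (ssub (T y) (T x)) Ha Hp Hq Hqp) as [_ H].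
    { left; apply Rdiv_lt_0_compat; lra. }
    { intro i. unfold ssub. apply Hy; auto. }
    fold C in H. eapply Rle_lt_trans. apply H.
    assert (eps / (2 * (C + 1)) * C = eps * (C / (2 * (C + 1)))) by (field; lra).
    rewrite H0. assert (C / (2 * (C + 1)) < 1).
    { apply (Rmult_lt_reg_r (2 * (C + 1))). lra. unfold Rdiv. rewrite Rmult_assoc, Rinv_l by lra. lra. }
    nra.
Qed.
Lemma F_bound m a x i : (2 <= m)%nat -> 0 < a -> l1 x ->
  Rabs (F_inf m a x i) <= N1 x * bq a (1 / INR (m - 1)) i.
Proof.
  intros Hm Ha Hl. unfold F_inf. rewrite oddroot_abs.
  pose proof (alpha_bounds (m - 1) ltac:(lia)) as Hal.
  pose proof (N1_nonneg x Hl).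
  eapply Rle_trans. apply rpow_le. split. apply Rabs_pos. apply Hx_bound; auto. lra.
  rewrite rpow_mult by (try apply pow_le; auto; left; apply bq_pos).
  rewrite rpow_pow_inv by (auto; lia). rewrite rpow_bq by auto. rewrite Rmult_1_l. lra.
Qed.

Lemma F_cont m a x : (2 <= m)%nat -> 0 < a -> l1 x -> forall eps, 0 < eps -> exists d, 0 < d /\
  forall y, l1 y -> N1 (ssub y x) < d -> forall i,
  Rabs (F_inf m a y i - F_inf m a x i) <= eps * bq a (1 / INR (m - 1)) i.
Proof.
  intros Hm Ha Hl eps He.
  set (n := (m - 1)%nat). assert (Hn : (1 <= n)%nat) by (unfold n; lia).
  pose proof (alpha_bounds n Hn) as Hal. set (al := 1 / INR n) in *.
  pose proof (N1_nonneg x Hl) as HNx.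
  set (L := INR n * (2 * N1 x + 2) ^ n + 1).
  assert (HL : 0 < L).
  { unfold L. pose proof (pos_INR n). pose proof (pow_le (2 * N1 x + 2) n ltac:(lra)). nra. }
  assert (He2 : 0 < (eps / 2) ^ n) by (apply pow_lt; lra).
  exists (Rmin 1 ((eps / 2) ^ n / L)). split.
  { apply Rmin_glb_lt. lra. apply Rdiv_lt_0_compat; lra. }
  intros y Hy Hd i.
  pose proof (Rmin_l 1 ((eps / 2) ^ n / L)). pose proof (Rmin_r 1 ((eps / 2) ^ n / L)).
  set (D := N1 (ssub y x)) in *.
  pose proof (N1_nonneg _ (l1_sub x y Hl Hy)) as HD. fold D in HD.
  pose proof (N1_triang x y Hl Hy) as Htr. fold D in Htr.
  pose proof (N1_nonneg y Hy) as HNy.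
  assert (HLip : Rabs (Hx m a y i - Hx m a x i) <= (L * D) * bq a 1 i).
  { eapply Rle_trans. apply Hx_lip; auto. fold n. fold D.
    apply Rmult_le_compat_r. left; apply bq_pos.
    apply Rmult_le_compat_r. auto. unfold L.
    assert ((N1 x + N1 y + 1) ^ n <= (2 * N1 x + 2) ^ n) by (apply pow_incr; lra).
    pose proof (pos_INR n). nra. }
  unfold F_inf. fold n. eapply Rle_trans. apply oddroot_holder; auto. fold al.
  eapply Rle_trans. apply Rmult_le_compat_l. lra. apply rpow_le. split. apply Rabs_pos. exact HLip. lra.
  rewrite rpow_mult by (try (left; apply bq_pos); apply Rmult_le_pos; lra).
  rewrite rpow_bq by auto. rewrite Rmult_1_l.
  assert (HLD : L * D <= (eps / 2) ^ n).
  { assert (D <= (eps / 2) ^ n / L) by lra. apply (Rmult_le_compat_l L) in H1; [|lra].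
    replace (L * ((eps / 2) ^ n / L)) with ((eps / 2) ^ n) in H1 by (field; lra). lra. }
  assert (rpow (L * D) al <= eps / 2).
  { rewrite <- (rpow_pow_inv (eps / 2) n) by (auto; lra). fold al. apply rpow_le; [split; [apply Rmult_le_pos; lra | auto]| lra]. }
  pose proof (bq_pos a al i). nra.
Qed.

Lemma F_hom m a : (2 <= m)%nat -> pos_homog (F_inf m a).
Proof.
  intros Hm x t _ Ht. apply functional_extensionality; intro i. unfold F_inf.
  rewrite Hx_scale. unfold sscale. apply oddroot_scale; auto. lia.
Qed.

Lemma pow_comb m c : (1 <= m)%nat -> 0 < c -> Rpower c (2 - INR m) * c ^ (m - 1) = c.
Proof.
  intros Hm Hc. rewrite <- Rpower_pow by auto. rewrite <- Rpower_plus.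
  rewrite minus_INR by auto. simpl INR. replace (2 - INR m + (INR m - 1)) with 1 by ring.
  apply Rpower_1; auto.
Qed.

Lemma T_theta m a : T_inf m a theta = theta.
Proof. unfold T_inf. destruct (excluded_middle_informative (theta = theta)); auto. congruence. Qed.

Lemma T_val m a x i : l1 x -> x <> theta -> T_inf m a x i = Rpower (N1 x) (2 - INR m) * Hx m a x i.
Proof.
  intros Hl Hne. unfold T_inf. destruct (excluded_middle_informative (x = theta)); [congruence|].
  rewrite lp_norm1 by auto. reflexivity.
Qed.

Lemma N1_pos x : l1 x -> x <> theta -> 0 < N1 x.
Proof.
  intros Hl Hne. destruct (N1_nonneg x Hl); auto. exfalso. apply Hne. apply N1_zero; auto.
Qed.

Lemma T_bound m a x i : (2 <= m)%nat -> 0 < a -> l1 x -> Rabs (T_inf m a x i) <= N1 x * bq a 1 i.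
Proof.
  intros Hm Ha Hl. destruct (excluded_middle_informative (x = theta)) as [E|E].
  - subst. rewrite T_theta. unfold theta. rewrite Rabs_R0. apply Rmult_le_pos. apply N1_nonneg; auto. left; apply bq_pos.
  - rewrite T_val by auto. pose proof (N1_pos x Hl E).
    assert (HP : 0 < Rpower (N1 x) (2 - INR m)) by (unfold Rpower; apply exp_pos).
    rewrite Rabs_mult, Rabs_right by lra.
    eapply Rle_trans. apply Rmult_le_compat_l. lra. apply Hx_bound; auto.
    rewrite <- Rmult_assoc, pow_comb by (auto; lia). lra.
Qed.

Lemma N1_sub_theta x : N1 (ssub theta x) = N1 x.
Proof. unfold N1, ssub, theta. apply Series_ext. intro. rewrite Rminus_0_l, Rabs_Ropp. reflexivity. Qed.

Lemma N1_sub_theta_r y : N1 (ssub y theta) = N1 y.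
Proof. unfold N1, ssub, theta. apply Series_ext. intro. rewrite Rminus_0_r. reflexivity. Qed.

Lemma T_cont m a x : (2 <= m)%nat -> 0 < a -> l1 x -> forall eps, 0 < eps -> exists d, 0 < d /\
  forall y, l1 y -> N1 (ssub y x) < d -> forall i,
  Rabs (T_inf m a y i - T_inf m a x i) <= eps * bq a 1 i.
Proof.
  intros Hm Ha Hl eps He.
  destruct (excluded_middle_informative (x = theta)) as [E|E].
  - subst. exists eps. split; auto. intros y Hy Hd i. rewrite N1_sub_theta_r in Hd.
    rewrite T_theta. unfold theta. rewrite Rminus_0_r.
    eapply Rle_trans. apply T_bound; auto. apply Rmult_le_compat_r. left; apply bq_pos. lra.
  - pose proof (N1_pos x Hl E) as HNx.
    set (n := (m - 1)%nat).
    set (g := fun t => Rpower t (2 - INR m)).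
    set (P0 := (N1 x + 1) ^ n).
    set (L0 := INR n * (2 * N1 x + 2) ^ n).
    assert (HP0 : 0 <= P0) by (apply pow_le; lra).
    assert (HL0 : 0 <= L0) by (apply Rmult_le_pos; [apply pos_INR| apply pow_le; lra]).
    assert (Hg : 0 < g (N1 x)) by (unfold g, Rpower; apply exp_pos).
    destruct (rpow_cont (2 - INR m) (N1 x) (eps / (2 * (P0 + 1))) HNx) as [d1 [Hd1 Hc1]].
    { apply Rdiv_lt_0_compat; lra. }
    set (d2 := eps / (2 * (g (N1 x) * L0 + 1))).
    assert (Hd2 : 0 < d2) by (unfold d2; apply Rdiv_lt_0_compat; nra).
    exists (Rmin (Rmin 1 (N1 x)) (Rmin d1 d2)). split.
    { repeat apply Rmin_glb_lt; lra. }
    intros y Hy Hd i.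
    pose proof (Rmin_l (Rmin 1 (N1 x)) (Rmin d1 d2)). pose proof (Rmin_r (Rmin 1 (N1 x)) (Rmin d1 d2)).
    pose proof (Rmin_l 1 (N1 x)). pose proof (Rmin_r 1 (N1 x)). pose proof (Rmin_l d1 d2). pose proof (Rmin_r d1 d2).
    set (D := N1 (ssub y x)) in *.
    assert (Ey : y <> theta).
    { intro Ey. subst y. unfold D in Hd. rewrite N1_sub_theta in Hd. lra. }
    pose proof (N1_pos y Hy Ey) as HNy.
    pose proof (N1_nonneg _ (l1_sub x y Hl Hy)) as HD. fold D in HD.
    pose proof (N1_diff x y Hl Hy) as Hdiff. fold D in Hdiff.
    rewrite !T_val by auto. fold (g (N1 y)). fold (g (N1 x)).
    assert (Hgd : Rabs (g (N1 y) - g (N1 x)) <= eps / (2 * (P0 + 1))).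
    { left. apply Hc1. lra. }
    assert (HHy : Rabs (Hx m a y i) <= P0 * bq a 1 i).
    { eapply Rle_trans. apply Hx_bound; auto. apply Rmult_le_compat_r. left; apply bq_pos.
      apply pow_incr. split. lra. apply Rabs_le_between in Hdiff. lra. }
    assert (HHd : Rabs (Hx m a y i - Hx m a x i) <= L0 * D * bq a 1 i).
    { eapply Rle_trans. apply Hx_lip; auto. fold n. fold D.
      apply Rmult_le_compat_r. left; apply bq_pos. apply Rmult_le_compat_r. auto.
      apply Rmult_le_compat_l. apply pos_INR. apply pow_incr. apply Rabs_le_between in Hdiff. lra. }
    replace (g (N1 y) * Hx m a y i - g (N1 x) * Hx m a x i) with
      ((g (N1 y) - g (N1 x)) * Hx m a y i + g (N1 x) * (Hx m a y i - Hx m a x i)) by ring.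
    eapply Rle_trans. apply Rabs_triang. rewrite !Rabs_mult. rewrite (Rabs_right (g (N1 x))) by lra.
    pose proof (bq_pos a 1 i) as Hb.
    assert (T1 : Rabs (g (N1 y) - g (N1 x)) * Rabs (Hx m a y i) <= eps / 2 * bq a 1 i).
    { eapply Rle_trans. apply Rmult_le_compat. apply Rabs_pos. apply Rabs_pos. exact Hgd. exact HHy.
      assert (eps / (2 * (P0 + 1)) * P0 <= eps / 2).
      { unfold Rdiv. rewrite Rinv_mult. 
        assert (/ (P0 + 1) * P0 <= 1).
        { apply (Rmult_le_reg_r (P0 + 1)). lra. rewrite Rmult_assoc, (Rmult_comm P0), <- Rmult_assoc, Rinv_l by lra. lra. }
        assert (0 < eps * / 2) by lra. nra. }
      nra. }
    assert (T2 : g (N1 x) * Rabs (Hx m a y i - Hx m a x i) <= eps / 2 * bq a 1 i).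
    { eapply Rle_trans. apply Rmult_le_compat_l. lra. exact HHd.
      assert (g (N1 x) * L0 * D <= eps / 2).
      { assert (D < d2) by lra. unfold d2 in H5.
        assert (D * (2 * (g (N1 x) * L0 + 1)) < eps).
        { apply (Rmult_lt_compat_r (2 * (g (N1 x) * L0 + 1))) in H5; [|nra].
          unfold Rdiv in H5. rewrite Rmult_assoc, Rinv_l, Rmult_1_r in H5 by nra. lra. }
        nra. }
      nra. }
    lra.
Qed.

Lemma T_hom m a : (2 <= m)%nat -> pos_homog (T_inf m a).
Proof.
  intros Hm x t Hx1 Ht. apply lp_mem1 in Hx1.
  destruct (excluded_middle_informative (x = theta)) as [E|E].
  - subst. assert (sscale t theta = theta) by (apply functional_extensionality; intro; unfold sscale, theta; ring).
    rewrite H, T_theta. symmetry; exact H.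
  - assert (Hl' : l1 (sscale t x)).
    { unfold l1, sscale. apply (ex_series_ext (K:=R_AbsRing) (V:=R_NormedModule) (fun i => Rabs t * Rabs (x i))).
      intro; symmetry; apply Rabs_mult. apply ex_scal; auto. }
    assert (E' : sscale t x <> theta).
    { intro H. apply E. apply functional_extensionality; intro i.
      apply (f_equal (fun f => f i)) in H. unfold sscale, theta in *.
      apply Rmult_integral in H. destruct H; auto; lra. }
    assert (EN : N1 (sscale t x) = t * N1 x).
    { unfold N1, sscale. rewrite <- Series_scal_l. apply Series_ext. intro.
      rewrite Rabs_mult, Rabs_right by lra. reflexivity. }
    pose proof (N1_pos x Hx1 E).
    apply functional_extensionality; intro i. rewrite T_val by auto. rewrite EN, Hx_scale.
    unfold sscale at 1. rewrite T_val by auto.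
    rewrite <- Rpower_mult_distr by lra.
    replace (Rpower t (2 - INR m) * Rpower (N1 x) (2 - INR m) * (t ^ (m - 1) * Hx m a x i)) with
      ((Rpower t (2 - INR m) * t ^ (m - 1)) * (Rpower (N1 x) (2 - INR m) * Hx m a x i)) by ring.
    rewrite pow_comb by (auto; lia). reflexivity.
Qed.

Theorem theorem3p2 (m : nat) (a : R) (hm : (2 <= m)%nat) (ha : 0 < a) :
  (Nat.Even m ->
     (forall x p, lp_mem 1 x -> INR m - 1 < p -> lp_mem p (F_inf m a x)) /\
     (forall p, INR m - 1 < p ->
        bounded_op p (F_inf m a) /\ continuous_op p (F_inf m a) /\
        pos_homog (F_inf m a)) /\
     (forall x, lp_mem 1 x -> lp_norm 1 x = 1 ->
        lp_norm (2 * (INR m - 1)) (F_inf m a x) <= K_const m a)) /\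
  ((forall x p, lp_mem 1 x -> 1 < p -> lp_mem p (T_inf m a x)) /\
   (forall p, 1 < p ->
      bounded_op p (T_inf m a) /\ continuous_op p (T_inf m a) /\
      pos_homog (T_inf m a)) /\
   (forall x, lp_mem 1 x -> lp_norm 1 x = 1 ->
      lp_norm 2 (T_inf m a x) <= C_const a)).
Proof.
  assert (Hn1 : INR (m - 1) = INR m - 1) by (rewrite minus_INR by lia; reflexivity).
  assert (Hnpos : 1 <= INR (m - 1)) by (replace 1 with (INR 1) by reflexivity; apply le_INR; lia).
  pose proof (alpha_bounds (m - 1) ltac:(lia)) as Hal.
  pose proof (Z2_bound a ha) as HZ. pose proof (Zs_pos a 2 ha ltac:(lra)) as HZp.
  assert (HB0 : 0 < PI ^ 2 / 6) by (pose proof PI_RGT_0; apply Rdiv_lt_0_compat; [apply pow_lt|]; lra).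
  assert (FP : forall p, INR m - 1 < p ->
     (forall x, lp_mem 1 x -> lp_mem p (F_inf m a x)) /\ bounded_op p (F_inf m a) /\ continuous_op p (F_inf m a)).
  { intros p Hp. apply (op_props a (1 / INR (m - 1))); try lra.
    - rewrite Hn1 in *. replace (1 / (INR m - 1) * p) with (p / (INR m - 1)) by (field; lra).
      apply (Rmult_lt_reg_r (INR m - 1)). lra. unfold Rdiv. rewrite Rmult_assoc, Rinv_l by lra. lra.
    - intros x Hx i. apply F_bound; auto.
    - intros x Hx. apply F_cont; auto. }
  assert (TP : forall p, 1 < p ->
     (forall x, lp_mem 1 x -> lp_mem p (T_inf m a x)) /\ bounded_op p (T_inf m a) /\ continuous_op p (T_inf m a)).
  { intros p Hp. apply (op_props a 1); try lra.
    - intros x Hx i. apply T_bound; auto.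
    - intros x Hx. apply T_cont; auto. }
  split.
  - intros _. split; [|split].
    + intros x p Hx Hp. apply (FP p Hp); auto.
    + intros p Hp. destruct (FP p Hp) as [_ [H1 H2]]. split; auto. split; auto. apply F_hom; auto.
    + intros x Hx Hn. apply lp_mem1 in Hx. rewrite lp_norm1 in Hn by auto.
      set (p := 2 * (INR m - 1)).
      assert (Hp : 0 < p) by (unfold p; lra).
      destruct (lp_bound a p (1 / INR (m - 1)) (N1 x) (F_inf m a x) ha Hp ltac:(lra)) as [_ H].
      { unfold p. rewrite Hn1. replace (1 / (INR m - 1) * (2 * (INR m - 1))) with 2 by (field; lra). lra. }
      { apply N1_nonneg; auto. }
      { intro i. apply F_bound; auto. }
      rewrite Hn, Rmult_1_l in H. unfold p in H at 1.
      replace (1 / INR (m - 1) * p) with 2 in H by (unfold p; rewrite Hn1; field; lra).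
      eapply Rle_trans. apply H. rewrite rpow_pos_eq by auto.
      unfold K_const. fold p.
      destruct (Rlt_dec a 1); apply Rle_Rpower_l; try (left; apply Rdiv_lt_0_compat; lra); split; auto.
  - split; [|split].
    + intros x p Hx Hp. apply (TP p Hp); auto.
    + intros p Hp. destruct (TP p Hp) as [_ [H1 H2]]. split; auto. split; auto. apply T_hom; auto.
    + intros x Hx Hn. apply lp_mem1 in Hx. rewrite lp_norm1 in Hn by auto.
      destruct (lp_bound a 2 1 (N1 x) (T_inf m a x) ha ltac:(lra) ltac:(lra) ltac:(lra)) as [_ H].
      { apply N1_nonneg; auto. }
      { intro i. apply T_bound; auto. }
      rewrite Hn, Rmult_1_l, Rmult_1_l in H.
      eapply Rle_trans. apply H. rewrite rpow_pos_eq by auto.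
      replace (1 / 2) with (/ 2) by field. rewrite Rpower_sqrt by auto.
      unfold C_const. destruct (Rlt_dec a 1).
      * apply sqrt_le_1_alt. exact HZ.
      * replace (PI / sqrt 6) with (sqrt (PI ^ 2 / 6)).
        apply sqrt_le_1_alt. exact HZ.
        rewrite sqrt_div_alt by lra. f_equal. rewrite <- Rsqr_pow2. apply sqrt_Rsqr. pose proof PI_RGT_0; lra.
Qed.
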